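(* Let $\Omega=C_0(\mathbb{R}_+,\mathbb{R}^d)$ with the metric \[D(\omega,\omega')=\sum_{n=1}^{\infty}\frac{1}{2^n}\,\frac{\sup_{0\le t\le n}|\omega(t)-\omega'(t)|}{1+\sup_{0\le t\le n}|\omega(t)-\omega'(t)|},\] and let $\theta_t$ be the shift on $\Omega$, $\theta_t(\omega)(s)=\omega(t+s)-\omega(t)$. For $h>0$ define $\phi_P^{(h)}:\Omega\to(\mathbb{R}^d)^{\mathbb{N}^*}$, $\phi_P^{(h)}(\omega)=(\omega(nh)-\omega((n-1)h))_{n\ge1}$; $\phi_I^{(h)}:(\mathbb{R}^d)^{\mathbb{N}^*}\to\Omega$, $\phi_I^{(h)}(y)(t)=\sum_{n=0}^{\lfloor t/h\rfloor}y_n+\frac{t-\lfloor t/h\rfloor h}{h}y_{\lfloor t/h\rfloor+1}$ (with $y_0:=0$); and the sequence shift $\theta^{(h)}((y_n)_{n\ge1})=(y_{n+1})_{n\ge1}$. For $t\ge0$ define $\overline{\theta}^{(h)}_t:\Omega\to\Omega$ by \[\overline{\theta}^{(h)}_t(\omega)=\frac{(\lfloor t/h\rfloor+1)h-t}{h}\,\phi_I^{(h)}\circ(\theta^{(h)})^{\lfloor t/h\rfloor}\circ\phi_P^{(h)}(\omega)+\frac{t-\lfloor t/h\rfloor h}{h}\,\phi_I^{(h)}\circ(\theta^{(h)})^{\lfloor t/h\rfloor+1}\circ\phi_P^{(h)}(\omega).\] Then for every $\omega\in\Omega$ and every $t\in\mathbb{R}_+$, \[\lim_{h\to0}D\big(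\theta_t(\omega),\overline{\theta}^{(h)}_t(\omega)\big)=0.\]
   Context: $|\cdot|$ is the Euclidean norm on $\mathbb{R}^d$; $(\theta^{(h)})^0$ is the identity. $\overline{\theta}^{(h)}_t$ is the second (environment) component of the time-interpolated embedding in $\mathbb{R}^m\times\Omega$ of a discrete-time repeated-interaction dynamical system with time step $h$. *)

(* Defs.v *)
From HB Require Import structures.
From mathcomp Require Import all_boot all_order all_algebra.
From mathcomp Require Import all_classical all_reals all_analysis.
Set Implicit Arguments. Unset Strict Implicit. Unset Printing Implicit Defensive.
Import Order.TTheory GRing.Theory Num.Theory.
Import numFieldNormedType.Exports.
Local Open Scope classical_set_scope.
Local Open Scope ring_scope.

Section Defs.
Variables (R : realType) (d : nat).
Local Notation vec := 'rV[R]_d.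
Local Notation path := (R -> vec).

Definition enorm (v : vec) : R := Num.sqrt (\sum_(i < d) (v 0 i) ^+ 2).

(* Omega = C_0(R_+, R^d): continuous on [0,+oo) and starting at 0
   (values at negative times are irrelevant) *)
Definition in_Omega (om : path) : Prop :=
  {within `[0, +oo[, continuous om} /\ om 0 = 0.

Definition supdist (om om' : path) (n : nat) : R :=
  sup [set enorm (om t - om' t) | t in `[0, n%:R]].

Definition Dmetric (om om' : path) : R :=
  limn (fun N => \sum_(1 <= n < N) ((2 ^- n) * (supdist om om' n / (1 + supdist om om' n)))).

Definition theta (t : R) (om : path) : path := fun s => om (t + s) - om t.

Definition flr (x : R) : nat := Num.truncn x.

(* sequences (y_n)_{n>=1} are functions nat -> vec; the value at 0 is the
   convention y_0 := 0 and is always 0 in sequences built below *)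
Definition phiP (h : R) (om : path) : nat -> vec :=
  fun n => if n == 0%N then 0 else om (n%:R * h) - om (n.-1%:R * h).

Definition phiI (h : R) (y : nat -> vec) : path := fun t =>
  \sum_(0 <= n < (flr (t / h)).+1) (if n == 0%N then 0 else y n)
  + ((t - (flr (t / h))%:R * h) / h) *: y (flr (t / h)).+1.

Definition seqshift (y : nat -> vec) : nat -> vec :=
  fun n => if n == 0%N then 0 else y n.+1.

Definition thetabar (h t : R) (om : path) : path := fun s =>
  (((flr (t / h)).+1%:R * h - t) / h) *: phiI h (iter (flr (t / h)) seqshift (phiP h om)) s
  + ((t - (flr (t / h))%:R * h) / h) *: phiI h (iter (flr (t / h)).+1 seqshift (phiP h om)) s.
End Defs.

(* Main.v *)
Require Import Defs.
From HB Require Import structures.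
From mathcomp Require Import all_boot all_order all_algebra.
From mathcomp Require Import all_classical all_reals all_analysis.
From mathcomp Require Import ring lra.
Import Order.TTheory GRing.Theory Num.Theory.
Import numFieldNormedType.Exports.
Local Open Scope classical_set_scope.
Local Open Scope ring_scope.

Lemma comp_le (R : realType) d (v : 'rV[R]_d) i : `|v 0 i| <= `|v|.
Proof.
change (`|v|) with (mx_norm v); rewrite mx_normrE.
exact: (le_bigmax _ (fun ij : 'I_1 * 'I_d => `|v ij.1 ij.2|) (0, i)).
Qed.

Lemma enorm_le (R : realType) d (v : 'rV[R]_d) : enorm v <= d%:R * `|v|.
Proof.
rewrite /enorm.
have H : \sum_(i < d) v 0 i ^+ 2 <= (d%:R * `|v|) ^+ 2.
  apply: (@le_trans _ _ (\sum_(i < d) `|v| ^+ 2)).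
    apply: ler_sum => i _; rewrite -real_normK ?num_real //.
    by rewrite lerXn2r ?nnegrE ?normr_ge0 // comp_le.
  rewrite sumr_const card_ord exprMn -(mulr_natl (`|v| ^+ 2)).
  apply: ler_wpM2r; first by rewrite exprn_ge0.
  case: d {v} => [|n]; first by rewrite expr0n.
  by rewrite -natrX ler_nat expnS leq_pmulr.
rewrite -(@ger0_norm _ (d%:R * `|v|)) ?mulr_ge0 //.
by rewrite -sqrtr_sqr ler_sqrt // sqr_ge0.
Qed.
Lemma geo_sum (R : realType) a K :
  \sum_(a <= n < a + K) (2:R) ^- n = 2 * 2 ^- a - 2 * 2 ^- (a + K).
Proof.
elim: K => [|K IH]; first by rewrite addn0 big_geq // subrr.
rewrite addnS big_nat_recr /= ?leq_addr // IH exprS invfM.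
set x := (2:R) ^- (a + K).
by field; rewrite expf_neq0.
Qed.

Lemma geo_le (R : realType) a N : \sum_(a <= n < N) (2:R) ^- n <= 2 * 2 ^- a.
Proof.
case: (leqP N a) => H; first by rewrite big_geq // mulr_ge0 // invr_ge0 exprn_ge0.
rewrite -(subnKC (ltnW H)) geo_sum gerBl mulr_ge0 // invr_ge0 exprn_ge0 //.
Qed.

Section Dlim.
Variable (R : realType) (x : nat -> R).
Hypothesis x0 : forall n, 0 <= x n.
Let S N := \sum_(1 <= n < N) ((2:R) ^- n * (x n / (1 + x n))).

Let term_ge0 n : 0 <= (2:R) ^- n * (x n / (1 + x n)).
Proof. by rewrite mulr_ge0 ?invr_ge0 ?exprn_ge0 ?divr_ge0 ?addr_ge0. Qed.

Let frac_le1 n : x n / (1 + x n) <= 1.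
Proof.
have := x0 n => h; rewrite ler_pdivrMr; last by lra.
lra.
Qed.

Let frac_le n : x n / (1 + x n) <= x n.
Proof.
have := x0 n => h; rewrite ler_pdivrMr; last by lra.
nra.
Qed.

Let S_cvg : cvgn S.
Proof.
apply: nondecreasing_is_cvgn.
  apply/nondecreasing_seqP => n; rewrite /S.
  case: n => [|n]; first by rewrite !big_geq.
  by rewrite (@big_nat_recr _ _ _ n.+1 1) //= lerDl.
exists 2 => _ [n _ <-]; rewrite /S /=.
apply: (@le_trans _ _ (2 * 2 ^- 1)); last by rewrite expr1 divff ?pnatr_eq0 // ler1n.
apply: le_trans (geo_le R 1 n); apply: ler_sum => i _; rewrite ler_piMr ?invr_ge0 ?exprn_ge0 //.
Qed.

Lemma Dlim_ge0 : 0 <= limn S.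
Proof.
apply: limr_ge => //; apply: nearW => N; rewrite /S sumr_ge0 //.
Qed.

Lemma Dlim_le M d : (0 < M)%N -> 0 <= d -> (forall n, (n < M)%N -> x n <= d) ->
  limn S <= d + 2 * 2 ^- M.
Proof.
move=> M0 d0 Hd; apply: limr_le => //; near=> N.
have MN : (M <= N)%N by near: N; exists M.
rewrite /S (big_cat_nat (n:=M)) //=; apply: lerD.
  apply: (@le_trans _ _ (d * \sum_(1 <= n < M) (2:R) ^- n)).
    rewrite mulr_sumr; rewrite !big_nat; apply: ler_sum => i /andP[_ iM].
    rewrite mulrC ler_wpM2r ?invr_ge0 ?exprn_ge0 //.
    exact: le_trans (frac_le i) (Hd i iM).
  apply: (@le_trans _ _ (d * (2 * 2 ^- 1))).
    by apply: ler_wpM2l => //; exact: geo_le.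
  by rewrite expr1 divff ?pnatr_eq0 // mulr1.
apply: le_trans (geo_le R M N); apply: ler_sum => i _; rewrite ler_piMr ?invr_ge0 ?exprn_ge0 //.
Unshelve. all: by end_near.
Qed.

End Dlim.
Section UC.
Variables (R : realType) (d : nat) (om : R -> 'rV[R]_d).
Hypothesis Hom : in_Omega om.

Lemma cont_eps x e : 0 <= x -> 0 < e -> exists2 del : R, 0 < del &
  forall y, 0 <= y -> `|x - y| < del -> `|om x - om y| < e.
Proof.
move=> x0 e0; case: Hom => Hc _.
have := (proj1 (subspace_continuousP _ _) Hc x).
have Ax : `[0, +oo[%classic x by rewrite /= in_itv /= andbT.
move=> /(_ Ax) /cvgrPdist_lt /(_ e e0).
rewrite near_withinE => -[del del0 H].
exists del => // y y0 xy; apply: H => //=.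
by rewrite in_itv /= andbT.
Qed.

Lemma UC T e : 0 < e -> \forall h \near (0:R)^'+, forall x y, 0 <= x <= T -> 0 <= y ->
  `|x - y| <= 3 * h -> `|om x - om y| < e.
Proof.
move=> e0.
have cK : compact `[0, T]%classic by exact: segment_compact.
pose P := (fun h x => forall y, 0 <= y -> `|x - y| <= 3 * h -> `|om x - om y| < e).
have H : \forall h \near (0:R)^'+, `[0, T]%classic `<=` P h; last first.
  apply: filter_app H; apply: nearW => h _ HK x y xT y0 Hxy.
  by apply: (HK x) => //=; rewrite in_itv /=.
apply: (proj2 (near_covering_withinP _) (proj1 (compact_near_coveringP _) cK)).
move=> x Kx.
have x0 : 0 <= x by move: Kx; rewrite /= in_itv /= => /andP[].
have [del del0 Hdel] := cont_eps x (e / 2) x0 ltac:(lra).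
exists (ball x (del / 2), ball (0:R) (del / 6)) => /=.
  split; first by apply: nbhsx_ballx; rewrite divr_gt0.
  exists (del / 6); first by rewrite /= divr_gt0.
  by move=> y hy _.
move=> [x' h] [/= bx bh] Kx' y y0 Hy.
rewrite /ball /= in bx bh.
have x'0 : 0 <= x' by move: Kx'; rewrite /= in_itv /= => /andP[].
have h1 : `|x - x'| < del by lra.
have h2 : `|x - y| < del.
  have := ler_normD (x - x') (x' - y); rewrite addrA subrK.
  have := ler_norm h; rewrite distrC subr0 in bh.
  move=> a b.
  have c : 3 * h < del / 2 by lra.
  have c2 : `|x' - y| < del / 2 by lra.
  lra.
have h3 := Hdel x' x'0 h1; have h4 := Hdel y y0 h2.
rewrite distrC in h3.
have := ler_normD (om x' - om x) (om x - om y); rewrite addrA subrK.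
lra.
Qed.
End UC.
Section Alg.
Variables (R : realType) (d : nat) (om : R -> 'rV[R]_d).

Lemma iter_shift k (y : nat -> 'rV[R]_d) : y 0%N = 0 -> forall n,
  iter k (@seqshift R d) y n = if n == 0%N then 0 else y (n + k)%N.
Proof.
move=> y0; elim: k => [|k IH] n /=.
  by case: n => [|n] //=; rewrite addn0.
rewrite /seqshift IH /=; case: n => [|n] //=.
by rewrite addSnnS.
Qed.

Lemma tel (f : nat -> 'rV[R]_d) k m :
  \sum_(0 <= n < m.+1) (if n == 0%N then 0 else f (n + k)%N - f (n + k).-1) = f (m + k)%N - f k.
Proof.
elim: m => [|m IH]; first by rewrite big_nat1 /= add0n subrr.
rewrite big_nat_recr //= IH addSn /=.
by rewrite addrC addrA subrK.
Qed.

Lemma phiI_iter h k s : phiI h (iter k (@seqshift R d) (phiP h om)) s =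
  om ((flr (s / h) + k)%:R * h) - om (k%:R * h) +
  ((s - (flr (s / h))%:R * h) / h) *: (om ((flr (s / h) + k).+1%:R * h) - om ((flr (s / h) + k)%:R * h)).
Proof.
rewrite /phiI; set m := flr (s / h).
have P0 : phiP h om 0 = 0 by [].
rewrite (iter_shift k _ P0) /= addSn.
rewrite (eq_bigr (fun n => if n == 0%N then 0 else om ((n + k)%:R * h) - om ((n + k).-1%:R * h))).
  by rewrite (tel (fun j => om (j%:R * h))) /=.

move=> n _; rewrite (iter_shift k _ P0); case: n => [|n] //=.
Qed.

Lemma comb (c e : R) (u v : 'rV[R]_d) : 0 <= c <= 1 -> `|u| <= e -> `|v| <= e ->
  `|(1 - c) *: u + c *: v| <= e.
Proof.
move=> /andP[c0 c1] hu hv.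
apply: le_trans (ler_normD _ _) _.
rewrite !normrZ (ger0_norm c0) ger0_norm; last by lra.
nra.
Qed.

Lemma flr_itv (x h : R) : 0 <= x -> 0 < h -> (flr (x / h))%:R * h <= x < (flr (x / h)).+1%:R * h.
Proof.
move=> x0 h0; have := truncn_itv (divr_ge0 x0 (ltW h0)).
rewrite /flr => /andP[a b].
by rewrite -ler_pdivlMr // -ltr_pdivrMr // a b.
Qed.

Lemma pt_bound h t s e T : 0 < h -> 0 <= t -> 0 <= s -> t + s <= T ->
  (forall x y, 0 <= x <= T -> 0 <= y -> `|x - y| <= 3 * h -> `|om x - om y| < e) ->
  `|theta t om s - thetabar h t om s| <= 2 * e.
Proof.
move=> h0 t0 s0 tsT UCh.
rewrite /thetabar !phiI_iter /theta.
have := flr_itv _ _ t0 h0; have := flr_itv _ _ s0 h0.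
set k := flr (t / h); set m := flr (s / h).
move=> /andP[m1 m2] /andP[k1 k2].
rewrite addnS.
set a := (t - k%:R * h) / h; set b := (s - m%:R * h) / h.
have ea : ((k.+1)%:R * h - t) / h = 1 - a by rewrite /a; field; rewrite gt_eqF.
rewrite ea.
set X := om (t + s); set Y := om t; set A := om ((m + k)%:R * h).
set B := om ((m + k).+1%:R * h); set C := om ((m + k).+2%:R * h).
set P0 := om (k%:R * h); set P1 := om (k.+1%:R * h).
have -> : X - Y - ((1 - a) *: (A - P0 + b *: (B - A)) + a *: (B - P1 + b *: (C - B))) =
   ((1 - a) *: (P0 - Y) + a *: (P1 - Y)) -
   ((1 - a) *: ((1 - b) *: (A - X) + b *: (B - X)) + a *: ((1 - b) *: (B - X) + b *: (C - X))).
  apply/matrixP => i j; rewrite !mxE; ring.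
have a01 : 0 <= a <= 1.
  rewrite /a ler_pdivlMr // ler_pdivrMr // mul0r mul1r; apply/andP; split; lra.
have b01 : 0 <= b <= 1.
  rewrite /b ler_pdivlMr // ler_pdivrMr // mul0r mul1r; apply/andP; split; lra.
have nk := natrD R m k.
have hX : forall z : R, 0 <= z -> `|(t + s) - z| <= 3 * h -> `|om z - X| <= e.
  move=> z z0 hz; rewrite distrC; apply: ltW; apply: UCh => //.
  by apply/andP; split; lra.
have hY : forall z : R, 0 <= z -> `|t - z| <= 3 * h -> `|om z - Y| <= e.
  move=> z z0 hz; rewrite distrC; apply: ltW; apply: UCh => //.
  by apply/andP; split; lra.
have k0 : 0 <= k%:R :> R by [].
have e1 : ((m + k).+1%:R : R) = m%:R + k%:R + 1 by rewrite -natr1 natrD.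
have e2 : ((m + k).+2%:R : R) = m%:R + k%:R + 2 by rewrite -[(m+k).+2]addn2 natrD natrD.
have e3 : (k.+1%:R : R) = k%:R + 1 by rewrite -natr1.
have mm0 : 0 <= m%:R :> R by [].
have hA : `|A - X| <= e.
  apply: hX; first by rewrite mulr_ge0 // ltW.
  rewrite ler_norml; apply/andP; rewrite natrD; split; nra.
have hB : `|B - X| <= e.
  apply: hX; first by rewrite mulr_ge0 // ltW.
  rewrite ler_norml; apply/andP; rewrite e1; split; nra.
have hC : `|C - X| <= e.
  apply: hX; first by rewrite mulr_ge0 // ltW.
  rewrite ler_norml; apply/andP; rewrite e2; split; nra.
have hP0 : `|P0 - Y| <= e.
  apply: hY; first by rewrite mulr_ge0 // ltW.
  rewrite ler_norml; apply/andP; split; nra.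
have hP1 : `|P1 - Y| <= e.
  apply: hY; first by rewrite mulr_ge0 // ltW.
  rewrite ler_norml; apply/andP; rewrite e3; split; nra.
apply: le_trans (ler_normB _ _) _.
rewrite mulr2n mulrDl mul1r; apply: lerD.
  exact: comb.
by apply: comb => //; apply: comb.
Qed.

End Alg.

Lemma supdist_ge0 (R : realType) d (f g : R -> 'rV[R]_d) n : 0 <= supdist f g n.
Proof.
rewrite /supdist.
set E := [set _ | _ in _].
have E0 : E (enorm (f 0 - g 0)).
  exists 0 => //.
  by rewrite /= in_itv /= lexx ler0n.
have en0 : 0 <= enorm (f 0 - g 0) by rewrite /enorm sqrtr_ge0.
have [ub|nub] := pselect (has_ubound E).
  exact: le_trans en0 (ub_le_sup ub E0).
rewrite sup_out // => -[_ ]; exact: nub.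
Qed.

Lemma supdist_le (R : realType) d (f g : R -> 'rV[R]_d) n del :
  (forall s, 0 <= s <= n%:R -> enorm (f s - g s) <= del) -> supdist f g n <= del.
Proof.
move=> H; rewrite /supdist; apply: ge_sup.
  by exists (enorm (f 0 - g 0)); exists 0 => //; rewrite /= in_itv /= lexx ler0n.
move=> _ [s /= hs <-]; apply: H; move: hs; by rewrite in_itv /=.
Qed.

Theorem theorem5p1 (R : realType) (d : nat) (om : R -> 'rV[R]_d) (t : R) :
  in_Omega om -> 0 <= t ->
  Dmetric (theta t om) (thetabar h t om) @[h --> 0^'+] --> 0.
Proof.
move=> Hom t0; apply/cvgrPdist_lt => eps eps0.
pose M := (Num.truncn (4 / eps)).+1.
have M0 : (0 < M)%N by [].
have M1 : 2 * (2:R) ^- M < eps / 2.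
  have hM : 4 / eps < M%:R by exact: truncnS_gt.
  have h2M : (M%:R : R) < 2 ^+ M by rewrite -natrX ltr_nat ltn_expl.
  have p2 : (0:R) < 2 ^+ M by rewrite exprn_gt0.
  rewrite ltr_pdivrMr // in hM.
  rewrite -/(2 / 2 ^+ M) ltr_pdivrMr //.
  nra.
pose del := eps / 4.
pose e := del / (2 * (d%:R + 1)).
have e0 : 0 < e by rewrite /e divr_gt0 // ?mulr_gt0 // ?ltr_wpDl //; lra.
near=> h.
have h0 : 0 < h by near: h; exact: nbhs_right_gt.
have Hu : forall x y : R, 0 <= x <= t + M%:R -> 0 <= y -> `|x - y| <= 3 * h -> `|om x - om y| < e.
  by near: h; exact: UC.
have sd0 := supdist_ge0 _ _ (theta t om) (thetabar h t om).
have D0 := @Dlim_ge0 _ _ sd0.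
have D1 := @Dlim_le _ _ sd0 M del M0.
rewrite /Dmetric sub0r normrN ger0_norm //.
apply: le_lt_trans (D1 _ _) _.
- rewrite /del; lra.
- move=> n nM; apply: supdist_le => s /andP[s0 sn].
  apply: (@le_trans _ _ (d%:R * `|theta t om s - thetabar h t om s|)); first exact: enorm_le.
  have nM' : (n%:R : R) <= M%:R by rewrite ler_nat ltnW.
  have hb := @pt_bound _ _ om h t s e (t + M%:R) h0 t0 s0 ltac:(lra) Hu.
  have de : 2 * e * (d%:R + 1) = del by rewrite /e; field; rewrite gt_eqF // ltr_wpDl.
  have dd : (0:R) <= d%:R by [].
  apply: (@le_trans _ _ (d%:R * (2 * e))); first by apply: ler_wpM2l.
  nra.
- rewrite /del; lra.
Unshelve. all: by end_near.
Qed.
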